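(* Let $k\geq 3$ and let $G$ be a $k$-uniform hypergraph. Then there is a picture $(P_0,\psi_0)$ over $G$ together with a family $(L_e)_{e\in E(G)}$ of mutually disjoint combinatorial lines such that $P_0=\bigcup_{e\in E(G)}L_e$ and $\psi_0[L_e]=e$ for every $e\in E(G)$.
   Context: A combinatorial line in $[k]^m$ is a set $\{\eta(i)\colon i\in[k]\}$ where, for some partition $[m]=C\cup M$ with $M\neq\emptyset$ and values $u_c\in[k]$ ($c\in C$), $\eta(i)$ has $c$-th coordinate $u_c$ for $c\in C$ and coordinate $i$ on every coordinate in $M$. A quasiline in $[k]^m$ is a $k$-element subset $L$ such that in every coordinate the entries of the points of $L$ are either all identical or mutually distinct. A picture over a $k$-uniform hypergraph $G$ ($k\geq3$) is a pair $(P,\psi)$ consisting of a subset $P\subseteq[k]^m$ of some Hales–Jewett cube and a map $\psi\colon P\to V(G)$ such that every quasiline $L\subseteq P$ is a combinatorial line and satisfies $\psi[L]\in E(G)$. *)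

(* Defs.v *)
From mathcomp Require Import all_boot.
Set Implicit Arguments. Unset Strict Implicit. Unset Printing Implicit Defensive.

Definition cube (k m : nat) : finType := {ffun 'I_m -> 'I_k}.

Definition is_comb_line (k m : nat) (L : {set cube k m}) : Prop :=
  exists (M : {set 'I_m}) (u : 'I_m -> 'I_k),
    M != set0 /\
    L = [set [ffun c => if c \in M then i else u c] | i : 'I_k].

Definition is_quasiline (k m : nat) (L : {set cube k m}) : Prop :=
  #|L| = k /\
  forall c : 'I_m,
    (forall x y, x \in L -> y \in L -> x c = y c) \/
    (forall x y, x \in L -> y \in L -> x != y -> x c != y c).

Definition pimage (k m : nat) (V : finType) (P : {set cube k m})
  (psi : {x : cube k m | x \in P} -> V) (L : {set cube k m}) : {set V} :=
  psi @: [set x : {x : cube k m | x \in P} | val x \in L].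

Definition is_picture (k m : nat) (V : finType) (E : {set {set V}})
  (P : {set cube k m}) (psi : {x : cube k m | x \in P} -> V) : Prop :=
  forall L : {set cube k m}, L \subset P -> is_quasiline L ->
    is_comb_line L /\ pimage psi L \in E.

Definition k_uniform (k : nat) (V : finType) (E : {set {set V}}) : Prop :=
  forall e, e \in E -> #|e| = k.

(* Main.v *)
Require Import Defs.
From mathcomp Require Import all_boot.
Set Implicit Arguments. Unset Strict Implicit. Unset Printing Implicit Defensive.

Definition NN (V : finType) := #|{: ({set V} * bool)%type}|.
Definition rk (V : finType) (p : ({set V} * bool)%type) : 'I_(NN V) := enum_rank p.

Lemma rk_eq (V : finType) p q : (@rk V p == rk q) = (p == q).
Proof. exact: (inj_eq (@enum_rank_inj _)). Qed.

Definition zz k : 'I_k.+1 := inord 0.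
Definition oo k : 'I_k.+1 := inord 1.

Lemma zo k : 2 <= k.+1 -> zz k != oo k.
Proof.
move=> hk; apply/eqP => /(congr1 val); rewrite /= !inordK //; by case: k hk => [|[]].
Qed.

Definition uu k (V : finType) (e : {set V}) (c : 'I_(NN V)) : 'I_k.+1 :=
  if c == rk (e, true) then oo k else zz k.

Definition pt k (V : finType) (e : {set V}) (i : 'I_k.+1) : cube k.+1 (NN V) :=
  [ffun c => if c \in [set rk (e, false)] then i else uu k e c].

Definition Lf k (V : finType) (e : {set V}) : {set cube k.+1 (NN V)} :=
  [set [ffun c => if c \in [set rk (e, false)] then i else uu k e c] | i : 'I_k.+1].

Definition P0 k (V : finType) (E : {set {set V}}) := \bigcup_(e in E) Lf k e.

Definition edge_of k (V : finType) (E : {set {set V}}) (x : cube k.+1 (NN V)) : {set V} :=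
  odflt set0 [pick e in E | x (rk (e, true)) == oo k].

Definition psi0 k (V : finType) (E : {set {set V}}) (v0 : V)
  (x : {x : cube k.+1 (NN V) | x \in P0 k E}) : V :=
  nth v0 (enum (edge_of E (val x))) (val x (rk (edge_of E (val x), false))).

Lemma pt_self k V e i : @pt k V e i (rk (e, false)) = i.
Proof. by rewrite ffunE in_set1 eqxx. Qed.

Lemma pt_true k V e e' i : @pt k V e i (rk (e', true)) = if e' == e then oo k else zz k.
Proof.
rewrite ffunE in_set1 rk_eq /uu rk_eq !xpair_eqE /=.
by case: (e' == e); rewrite ?andbF ?andbT ?eqxx.
Qed.

Lemma Lf_pt k V e x : (x \in @Lf k V e) = [exists i, x == pt e i].
Proof.
apply/imsetP/existsP => [[i _ ->]|[i /eqP ->]]; by exists i.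
Qed.

Lemma pt_inj k V e : injective (@pt k V e).
Proof. by move=> i j h; rewrite -(pt_self e i) -(pt_self e j) h. Qed.

Lemma card_Lf k V e : #|@Lf k V e| = k.+1.
Proof.
have -> : Lf k e = [set pt e i | i : 'I_k.+1] by [].
by rewrite card_imset ?card_ord //; apply: pt_inj.
Qed.

Lemma edge_of_pt k (V : finType) (E : {set {set V}}) e i : 2 <= k.+1 -> e \in E -> @edge_of k V E (pt e i) = e.
Proof.
move=> hk eE; rewrite /edge_of; case: pickP => [e' /andP [_]|/(_ e)].
  rewrite pt_true; case: (eqVneq e' e) => [-> //|_ h]; by move: (zo hk); rewrite h.
by rewrite eE pt_true !eqxx.
Qed.

Lemma P0P k (V : finType) (E : {set {set V}}) x : reflect (exists e i, e \in E /\ x = @pt k V e i) (x \in P0 k E).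
Proof.
apply: (iffP bigcupP) => [[e eE]|[e [i [eE ->]]]].
  by rewrite Lf_pt => /existsP [i /eqP ->]; exists e, i.
by exists e => //; rewrite Lf_pt; apply/existsP; exists i.
Qed.

Lemma psi0_pt k (V : finType) (E : {set {set V}}) v0 e i (h : pt e i \in P0 k E) : 2 <= k.+1 -> e \in E ->
  @psi0 k V E v0 (exist _ (pt e i) h) = nth v0 (enum e) i.
Proof. by move=> hk eE; rewrite /psi0 /= edge_of_pt // pt_self. Qed.

Lemma main k (hk : 3 <= k.+1) (V : finType) (E : {set {set V}})
  (hE : k_uniform k.+1 E) (v0 : V) :
  exists (m : nat) (P0 : {set cube k.+1 m}) (psi0 : {x : cube k.+1 m | x \in P0} -> V)
         (Lf : {set V} -> {set cube k.+1 m}),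
    is_picture E psi0 /\
    (forall e, e \in E -> is_comb_line (Lf e)) /\
    (forall e1 e2, e1 \in E -> e2 \in E -> e1 != e2 -> [disjoint Lf e1 & Lf e2]) /\
    P0 = \bigcup_(e in E) Lf e /\
    (forall e, e \in E -> pimage psi0 (Lf e) = e).
Proof.
have hk2 : 2 <= k.+1 by apply: ltnW.
have himg : forall e, e \in E -> pimage (@psi0 k V E v0) (Lf k e) = e.
  move=> e eE; apply/setP => v; apply/imsetP/idP.
    case=> -[x xP]; rewrite inE /= Lf_pt => /existsP [i /eqP ex] ->.
    move: xP; rewrite ex => xP; rewrite psi0_pt //.
    rewrite -mem_enum; apply: mem_nth; rewrite -cardE hE //.
  move=> ve.
  have il : index v (enum e) < k.+1 by rewrite -(hE e eE) cardE index_mem mem_enum.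
  have xP : pt e (Ordinal il) \in P0 k E by apply/P0P; exists e, (Ordinal il).
  exists (exist (fun x => x \in P0 k E) _ xP).
    by rewrite inE /= Lf_pt; apply/existsP; exists (Ordinal il).
  by rewrite psi0_pt //= nth_index // mem_enum.
exists (NN V), (P0 k E), (@psi0 k V E v0), (@Lf k V).
split; last split; last split; last split => //.
- move=> L LP [cardL hL].
  have : 0 < #|L| by rewrite cardL; apply: leq_trans hk.
  case/card_gt0P => x0 x0L.
  have /P0P [e [i [eE ex0]]] := subsetP LP _ x0L.
  have sub : L \subset Lf k e.
    apply/subsetP => y yL.
    have /P0P [e' [j [e'E ey]]] := subsetP LP _ yL.
    case: (eqVneq e' e) => [ee|ne].
      by rewrite ey ee Lf_pt; apply/existsP; exists j.
    exfalso; case: (hL (rk (e, true))) => [hc|hd].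
      move: (hc _ _ x0L yL); rewrite ex0 ey !pt_true eqxx eq_sym (negbTE ne) => /eqP.
      by rewrite eq_sym (negbTE (zo hk2)).
    have inj : {in L &, injective (fun x : cube k.+1 (NN V) => x (rk (e, true)))}.
      move=> a b aL bL hab; case: (eqVneq a b) => // nab.
      by move: (hd _ _ aL bL nab); rewrite hab eqxx.
    have : #|[seq x (rk (e, true)) | x : cube k.+1 (NN V) in L]| <= 2.
      apply: leq_trans (_ : #|[set zz k; oo k]| <= 2); last by rewrite cards2; case: (zz k != oo k).
      apply: subset_leq_card; apply/subsetP => c /imageP [x xL ->].
      have /P0P [e2 [j2 [_ ->]]] := subsetP LP _ xL.
      by rewrite pt_true !inE; case: (e == e2); rewrite eqxx ?orbT.
    by rewrite card_in_image // cardL; move: hk; clear; case: k => [|[|[]]].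
  have eL : L = Lf k e.
    by apply/eqP; rewrite eqEcard sub card_Lf cardL leqnn.
  rewrite eL; split; last by rewrite himg.
  by exists [set rk (e, false)], (uu k e); split => //; apply/set0Pn; exists (rk (e, false)); rewrite inE.
- move=> e eE; exists [set rk (e, false)], (uu k e); split => //.
  by apply/set0Pn; exists (rk (e, false)); rewrite inE.
- move=> e1 e2 _ _ ne; rewrite -setI_eq0; apply/eqP/setP => x; rewrite !inE !Lf_pt.
  apply/andP => -[/existsP [i /eqP h1] /existsP [j /eqP h2]].
  move: (congr1 (fun x : cube k.+1 (NN V) => x (rk (e1, true))) (etrans (esym h1) h2)).
  rewrite /= !pt_true eqxx (negbTE ne) => /eqP.
  by rewrite eq_sym (negbTE (zo hk2)).
Qed.

Theorem lemma4p3 (k : nat) (hk : 3 <= k) (V : finType) (E : {set {set V}})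
  (hE : k_uniform k E) :
  exists (m : nat) (P0 : {set cube k m}) (psi0 : {x : cube k m | x \in P0} -> V)
         (Lf : {set V} -> {set cube k m}),
    is_picture E psi0 /\
    (forall e, e \in E -> is_comb_line (Lf e)) /\
    (forall e1 e2, e1 \in E -> e2 \in E -> e1 != e2 -> [disjoint Lf e1 & Lf e2]) /\
    P0 = \bigcup_(e in E) Lf e /\
    (forall e, e \in E -> pimage psi0 (Lf e) = e).
Proof.
case: (pickP (@predT V)) => [v0 _|V0].
  by case: k hk hE => [|k] hk hE; [done | exact: main].
have E0 : E = set0.
  apply/setP => e; rewrite inE; apply/negbTE/negP => eE.
  have : 0 < #|e| by rewrite hE //; apply: leq_trans hk.
  by case/card_gt0P => v; move: (V0 v).
pose P : {set cube k 0} := set0.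
have nP : forall x : {x : cube k 0 | x \in P}, False.
  by move=> [x]; rewrite inE.
exists 0, P, (fun x => match nP x with end), (fun _ => set0).
rewrite E0; split; last split; last split; last split.
- move=> L LP [cL _]; exfalso.
  move: LP; rewrite subset0 => /eqP L0; move: cL; rewrite L0 cards0 => k0.
  by rewrite -k0 in hk.
- by move=> e; rewrite inE.
- by move=> e; rewrite inE.
- by rewrite big_set0.
- by move=> e; rewrite inE.
Qed.
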